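(* Let $S$ be an Enriques surface of the first Mendes Lopes–Pardini family and $\mathcal{R}=\{R_1,\dots,R_{12}\}$ as in the context. Then the elliptic fibrations in $\mathcal{E}(S,\mathcal{R})$ are: $2$ of type $(2\widetilde{A}_3^{\mathrm{HF}})$, $8$ of type $(\widetilde{A}_7^{\mathrm{F}})$, $8$ of type $(\widetilde{A}_7^{\mathrm{HF}})$, $2$ of type $(2\widetilde{D}_4^{\mathrm{F}})$, $8$ of type $(\widetilde{D}_6^{\mathrm{F}})$, $16$ of type $(\widetilde{D}_8^{\mathrm{F}})$. Moreover $\mathrm{cnd}(S,\mathcal{R})=8$, hence $\mathrm{nd}(S)\ge 8$, and the following classes form an isotropic sequence of classes of half-fibers of length $8$: $[R_1+R_2+R_3+R_4]$, $\tfrac12[R_1+R_2+R_4+R_5+R_7+R_8+R_{10}+R_{11}]$, $\tfrac12[R_1+R_2+R_4+R_5+R_7+R_9+R_{10}+R_{12}]$, $\tfrac12[R_1+R_3+R_4+R_5+R_7+R_8+R_{10}+R_{12}]$, $\tfrac12[R_1+R_3+R_4+R_5+R_7+R_9+R_{10}+R_{11}]$, $\tfrac12[R_2+R_3+2R_4+R_5+R_6]$, $\tfrac12[2R_1+R_2+R_3+R_{11}+R_{12}]$, $\tfrac12[R_2+R_3+2R_4+2R_5+2R_7+R_8+R_9]$.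
   Context: Work over $\mathbb{C}$. Let $D_1,D_2$ be elliptic curves, $A=D_1\times D_2$, $a\in D_1$, $b\in D_2$ nonzero $2$-torsion points, and $\mathbb{Z}_2^2=\langle e_1,e_2\rangle$ acting by $e_1(x_1,x_2)=(-x_1,x_2+b)$, $e_2(x_1,x_2)=(x_1+a,-x_2)$. The minimal resolution $S$ of $A/\mathbb{Z}_2^2$ (which has eight $A_1$ points) is an Enriques surface; the two projections induce elliptic fibrations each with two $\widetilde{D}_4$ fibers, whose components are twelve smooth rational curves $R_1,\dots,R_{12}$ with dual graph: $R_1,R_4,R_7,R_{10}$ pairwise disjoint; $R_2,R_3$ each meet $R_1,R_4$; $R_5,R_6$ each meet $R_4,R_7$; $R_8,R_9$ each meet $R_7,R_{10}$; $R_{11},R_{12}$ each meet $R_{10},R_1$; all intersections $1$, no others. The labeling is such that $\tfrac12(R_1+R_2+R_4+R_5+R_7+R_8+R_{10}+R_{11})\in\mathrm{Num}(S)$. Definitions: $\mathrm{Num}(S)$ = divisors mod numerical equivalence. Half-fibers: reduced curves $F$ with $2F$ a multiple fiber of an elliptic fibration. $\mathrm{nd}(S)$ = maximal length of a sequence of classes of half-fibers $f_1,\dots,f_m$ with $f_i\cdot f_j=1$ for $i\neq j$. For a finite set $\mathcal{R}$ of smooth rational curves: an $\mathcal{R}$-elliptic cycle is $C=\sum_{R\in\mathcal{R}}a_RR$, $a_R\ge0$, whose support has dual graph an extended Dynkin diagram $\widetilde{A}_n,\widetilde{D}_n,\widetilde{E}_{6,7,8}$ with $a_R$ the multiplicities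 of the corresponding Kodaira fiber. Put $c(C)=\tfrac12[C]$ if $\tfrac12[C]\in\mathrm{Num}(S)$ (then $C$ is a fiber) and $c(C)=[C]$ otherwise (then $C$ is a half-fiber). $\mathsf{HF}(S,\mathcal{R})=\{c(C)\}$; $\mathrm{cnd}(S,\mathcal{R})$ = max $m$ with $f_1,\dots,f_m\in\mathsf{HF}(S,\mathcal{R})$, $f_i\cdot f_j=1-\delta_{ij}$; $\mathcal{E}(S,\mathcal{R})$ = set of elliptic fibrations $|2F|$ with $[F]\in\mathsf{HF}(S,\mathcal{R})$. The type of a fibration in $\mathcal{E}(S,\mathcal{R})$ is the formal sum, over the $\mathcal{R}$-elliptic cycles $C$ whose support is a fiber of it, of $X^{\mathrm{F}}$ (if $C$ is a fiber) or $X^{\mathrm{HF}}$ (if $C$ is a half-fiber), $X$ the extended Dynkin type of $C$. *)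

(* Defs.v *)
From HB Require Import structures.
From mathcomp Require Import all_boot all_order all_algebra.
Set Implicit Arguments. Unset Strict Implicit. Unset Printing Implicit Defensive.
Import Order.TTheory GRing.Theory Num.Theory.
Local Open Scope ring_scope.

(* ---------- Num(S) modelled as Z^10 with an (even unimodular) form Q ---------- *)
Definition dot (Q : 'M[int]_10) (x y : 'rV[int]_10) : int := (x *m Q *m y^T) 0 0.

Definition halfable (x : 'rV[int]_10) : Prop := exists z : 'rV[int]_10, x = z *+ 2.

(* ---------- the configuration R_1..R_12 (index k : 'I_12 is R_(k+1)) ---------- *)
(* edges of the dual graph, 1-based labels as in the paper *)
Definition edges12 : seq (nat * nat) :=
  [:: (2,1); (2,4); (3,1); (3,4); (5,4); (5,7); (6,4); (6,7);
      (8,7); (8,10); (9,7); (9,10); (11,10); (11,1); (12,10); (12,1)].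

Definition gram (i j : 'I_12) : int :=
  if i == j then -2
  else if ((i.+1, j.+1) \in edges12) || ((j.+1, i.+1) \in edges12) then 1 else 0.

(* a divisor sum_k a_k R_k given by its coefficient list [a_1; ...; a_12] *)
Definition coefs (l : seq nat) : {ffun 'I_12 -> nat} := [ffun i : 'I_12 => nth 0%N l (nat_of_ord i)].

Definition cls (r : 'I_12 -> 'rV[int]_10) (a : {ffun 'I_12 -> nat}) : 'rV[int]_10 :=
  \sum_(k < 12) (a k)%:Z *: r k.

Inductive ktype := KA of nat | KD of nat | KE6 | KE7 | KE8.

Definition ktype_code (X : ktype) : nat * nat :=
  match X with KA n => (0, n) | KD n => (1, n) | KE6 => (2, 0)%N
             | KE7 => (3, 0)%N | KE8 => (4, 0)%N end.
Definition ktype_decode (c : nat * nat) : option ktype :=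
  match c with (0, n) => Some (KA n) | (1, n) => Some (KD n) | (2, _) => Some KE6
             | (3, _) => Some KE7 | (4, _) => Some KE8 | _ => None end%N.
Lemma ktype_codeK : pcancel ktype_code ktype_decode. Proof. by case. Qed.
HB.instance Definition _ := Equality.copy ktype (pcan_type ktype_codeK).

Definition kvalid (X : ktype) : bool :=
  match X with KA n => (0 < n)%N | KD n => (3 < n)%N | _ => true end.

Definition kv (X : ktype) : nat :=
  match X with KA n => n.+1 | KD n => n.+1 | KE6 => 7 | KE7 => 8 | KE8 => 9 end.

(* edges (with multiplicity: Ã_1 has a double edge) on vertices 0..kv X - 1 *)
Definition kedges (X : ktype) : seq (nat * nat) :=
  match X with
  | KA n => [seq (i, (i + 1) %% n.+1)%N | i <- iota 0 n.+1]
  | KD n => [seq (i, i.+1) | i <- iota 0 (n - 4)]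
              ++ [:: (n - 3, 0); (n - 2, 0); (n - 1, n - 4); (n, n - 4)]%N
  | KE6 => [:: (0,1); (1,2); (0,3); (3,4); (0,5); (5,6)]%N
  | KE7 => [:: (0,1); (1,2); (2,3); (3,4); (4,5); (5,6); (3,7)]%N
  | KE8 => [:: (0,1); (1,2); (2,3); (3,4); (4,5); (5,6); (6,7); (2,8)]%N
  end.

Definition kM (X : ktype) (i j : nat) : int :=
  if i == j then -2
  else (count (fun e => (e == (i, j)) || (e == (j, i))) (kedges X))%:Z.

Definition kmult (X : ktype) (i : nat) : nat :=
  match X with
  | KA _ => 1
  | KD n => if (i <= n - 4)%N then 2 else 1
  | KE6 => nth 0 [:: 3; 2; 1; 2; 1; 2; 1] i
  | KE7 => nth 0 [:: 1; 2; 3; 4; 3; 2; 1; 2] i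
  | KE8 => nth 0 [:: 2; 4; 6; 5; 4; 3; 2; 1; 3] i
  end%N.

Definition is_cycle (Q : 'M[int]_10) (r : 'I_12 -> 'rV[int]_10)
    (X : ktype) (a : {ffun 'I_12 -> nat}) : Prop :=
  kvalid X /\
  exists sigma : 'I_(kv X) -> 'I_12,
    [/\ injective sigma,
        (forall i j : 'I_(kv X), dot Q (r (sigma i)) (r (sigma j)) = kM X i j),
        (forall i : 'I_(kv X), a (sigma i) = kmult X i)
      & (forall k, (forall i, sigma i != k) -> a k = 0%N)].

Definition cmap (r : 'I_12 -> 'rV[int]_10) (a : {ffun 'I_12 -> nat})
    (f : 'rV[int]_10) : Prop :=
  (halfable (cls r a) /\ f *+ 2 = cls r a) \/ (~ halfable (cls r a) /\ f = cls r a).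

Definition HF (Q : 'M[int]_10) (r : 'I_12 -> 'rV[int]_10) (f : 'rV[int]_10) : Prop :=
  exists X a, is_cycle Q r X a /\ cmap r a f.

(* the fibration |2F| with [F] = f has type T (a multiset of pairs
   (extended Dynkin type, true = fiber "F" / false = half-fiber "HF")):
   T lists, with multiplicity, the R-elliptic cycles C with c(C) = f. *)
Definition fib_type (Q : 'M[int]_10) (r : 'I_12 -> 'rV[int]_10) (f : 'rV[int]_10)
    (T : seq (ktype * bool)) : Prop :=
  exists s : seq (ktype * {ffun 'I_12 -> nat} * bool),
    [/\ uniq [seq x.1 | x <- s],
        (forall x, x \in s ->
           [/\ is_cycle Q r x.1.1 x.1.2, cmap r x.1.2 f & (x.2 = true <-> halfable (cls r x.1.2))]),
        (forall X a, is_cycle Q r X a -> cmap r a f -> exists b, (X, a, b) \in s)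
      & perm_eq [seq (x.1.1, x.2) | x <- s] T].

Definition iso_seq (Q : 'M[int]_10) (r : 'I_12 -> 'rV[int]_10) (s : seq 'rV[int]_10) : Prop :=
  (forall f, f \in s -> HF Q r f) /\
  (forall i j, (i < size s)%N -> (j < size s)%N -> dot Q s`_i s`_j = (i != j)%:Z).

Definition cnd_eq (Q : 'M[int]_10) (r : 'I_12 -> 'rV[int]_10) (m : nat) : Prop :=
  (exists s, size s = m /\ iso_seq Q r s) /\ (forall s, iso_seq Q r s -> (size s <= m)%N).

(* Main.v *)
Require Import Defs.
From HB Require Import structures.
From mathcomp Require Import all_boot all_order all_algebra.
Import Order.TTheory GRing.Theory Num.Theory.
Set Implicit Arguments. Unset Strict Implicit. Unset Printing Implicit Defensive.
Local Open Scope ring_scope.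

Definition sumN (n : nat) (F : nat -> int) : int := foldr (fun j acc => F j + acc) 0 (iota 0 n).
Lemma sumN_big n F : sumN n F = \sum_(j < n) F j.
Proof.
rewrite -(big_mkord xpredT) /index_iota subn0 /sumN.
by elim: (iota 0 n) => [|x s IH]; rewrite ?big_nil ?big_cons //= IH.
Qed.
Definition gramN (i j : nat) : int := if i == j then -2 else if ((i.+1, j.+1) \in edges12) || ((j.+1, i.+1) \in edges12) then 1 else 0.
Lemma gramE (i j : 'I_12) : gram i j = gramN i j.
Proof. by []. Qed.
Definition psi (c : seq int) : seq int := [seq sumN 12 (fun i => c`_i * gramN i j) | j <- iota 0 12].
Definition bilc (c d : seq int) : int := sumN 12 (fun i => c`_i * sumN 12 (fun j => d`_j * gramN i j)).
Definition hl : seq (seq nat) :=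
  [:: [:: 1; 1; 0; 1; 1; 0; 1; 1; 0; 1; 1; 0]; [:: 2; 1; 1; 0; 0; 0; 0; 0; 0; 0; 1; 1];
      [:: 0; 1; 1; 2; 1; 1; 0; 0; 0; 0; 0; 0]; [:: 0; 0; 0; 0; 1; 1; 2; 1; 1; 0; 0; 0];
      [:: 0; 0; 0; 0; 0; 0; 0; 1; 1; 2; 1; 1]]%N.
Definition dbl (e m : seq int) : seq int :=
  mkseq (fun k => sumN 5 (fun j => e`_j * (nth 0%N (nth [::] hl j) k)%:Z) + m`_k *+ 2) 12.

Definition ent := (ktype * seq nat * seq nat * bool * seq int * seq int)%type.
Definition Ent X (s l : seq nat) (h : bool) (e m : seq int) : ent := (X, s, l, h, e, m).
Definition eX (x : ent) := x.1.1.1.1.1.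
Definition esig (x : ent) := x.1.1.1.1.2.
Definition el (x : ent) := x.1.1.1.2.
Definition eh (x : ent) := x.1.1.2.
Definition ee (x : ent) := x.1.2.
Definition em (x : ent) := x.2.
Definition catl : seq ent := [::
  Ent (KA 3) [:: 0; 1; 3; 2]%N [:: 1; 1; 1; 1; 0; 0; 0; 0; 0; 0; 0; 0]%N false [::] [:: 1; 1; 1; 1; 0; 0; 0; 0; 0; 0; 0; 0]%Z
; Ent (KA 3) [:: 0; 10; 9; 11]%N [:: 1; 0; 0; 0; 0; 0; 0; 0; 0; 1; 1; 1]%N false [::] [:: 1; 0; 0; 0; 0; 0; 0; 0; 0; 1; 1; 1]%Z
; Ent (KA 3) [:: 3; 4; 6; 5]%N [:: 0; 0; 0; 1; 1; 1; 1; 0; 0; 0; 0; 0]%N false [::] [:: 0; 0; 0; 1; 1; 1; 1; 0; 0; 0; 0; 0]%Z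
; Ent (KA 3) [:: 6; 7; 9; 8]%N [:: 0; 0; 0; 0; 0; 0; 1; 1; 1; 1; 0; 0]%N false [::] [:: 0; 0; 0; 0; 0; 0; 1; 1; 1; 1; 0; 0]%Z
; Ent (KA 7) [:: 0; 1; 3; 4; 6; 7; 9; 10]%N [:: 1; 1; 0; 1; 1; 0; 1; 1; 0; 1; 1; 0]%N true [:: 1; 0; 0; 0; 0]%Z [:: 0; 0; 0; 0; 0; 0; 0; 0; 0; 0; 0; 0]%Z
; Ent (KA 7) [:: 0; 1; 3; 4; 6; 7; 9; 11]%N [:: 1; 1; 0; 1; 1; 0; 1; 1; 0; 1; 0; 1]%N false [::] [:: 1; 1; 0; 1; 1; 0; 1; 1; 0; 1; 0; 1]%Z
; Ent (KA 7) [:: 0; 1; 3; 4; 6; 8; 9; 10]%N [:: 1; 1; 0; 1; 1; 0; 1; 0; 1; 1; 1; 0]%N false [::] [:: 1; 1; 0; 1; 1; 0; 1; 0; 1; 1; 1; 0]%Z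
; Ent (KA 7) [:: 0; 1; 3; 4; 6; 8; 9; 11]%N [:: 1; 1; 0; 1; 1; 0; 1; 0; 1; 1; 0; 1]%N true [:: 1; 0; 0; 0; 1]%Z [:: 0; 0; 0; 0; 0; 0; 0; -1; 0; -1; -1; 0]%Z
; Ent (KA 7) [:: 0; 1; 3; 5; 6; 7; 9; 10]%N [:: 1; 1; 0; 1; 0; 1; 1; 1; 0; 1; 1; 0]%N false [::] [:: 1; 1; 0; 1; 0; 1; 1; 1; 0; 1; 1; 0]%Z
; Ent (KA 7) [:: 0; 1; 3; 5; 6; 7; 9; 11]%N [:: 1; 1; 0; 1; 0; 1; 1; 1; 0; 1; 0; 1]%N true [:: 1; 0; 0; 1; 1]%Z [:: 0; 0; 0; 0; -1; 0; -1; -1; -1; -1; -1; 0]%Z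
; Ent (KA 7) [:: 0; 1; 3; 5; 6; 8; 9; 10]%N [:: 1; 1; 0; 1; 0; 1; 1; 0; 1; 1; 1; 0]%N true [:: 1; 0; 0; 1; 0]%Z [:: 0; 0; 0; 0; -1; 0; -1; -1; 0; 0; 0; 0]%Z
; Ent (KA 7) [:: 0; 1; 3; 5; 6; 8; 9; 11]%N [:: 1; 1; 0; 1; 0; 1; 1; 0; 1; 1; 0; 1]%N false [::] [:: 1; 1; 0; 1; 0; 1; 1; 0; 1; 1; 0; 1]%Z
; Ent (KA 7) [:: 0; 2; 3; 4; 6; 7; 9; 10]%N [:: 1; 0; 1; 1; 1; 0; 1; 1; 0; 1; 1; 0]%N false [::] [:: 1; 0; 1; 1; 1; 0; 1; 1; 0; 1; 1; 0]%Z
; Ent (KA 7) [:: 0; 2; 3; 4; 6; 7; 9; 11]%N [:: 1; 0; 1; 1; 1; 0; 1; 1; 0; 1; 0; 1]%N true [:: 1; 0; 0; 1; 0]%Z [:: -1; -1; 0; 0; 0; 0; 0; 0; 0; 0; -1; 0]%Z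
; Ent (KA 7) [:: 0; 2; 3; 4; 6; 8; 9; 10]%N [:: 1; 0; 1; 1; 1; 0; 1; 0; 1; 1; 1; 0]%N true [:: 1; 0; 0; 1; 1]%Z [:: -1; -1; 0; 0; 0; 0; 0; -1; 0; -1; -1; -1]%Z
; Ent (KA 7) [:: 0; 2; 3; 4; 6; 8; 9; 11]%N [:: 1; 0; 1; 1; 1; 0; 1; 0; 1; 1; 0; 1]%N false [::] [:: 1; 0; 1; 1; 1; 0; 1; 0; 1; 1; 0; 1]%Z
; Ent (KA 7) [:: 0; 2; 3; 5; 6; 7; 9; 10]%N [:: 1; 0; 1; 1; 0; 1; 1; 1; 0; 1; 1; 0]%N true [:: 1; 0; 0; 0; 1]%Z [:: -1; -1; 0; 0; 0; 1; 1; 0; 0; -1; -1; -1]%Z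
; Ent (KA 7) [:: 0; 2; 3; 5; 6; 7; 9; 11]%N [:: 1; 0; 1; 1; 0; 1; 1; 1; 0; 1; 0; 1]%N false [::] [:: 1; 0; 1; 1; 0; 1; 1; 1; 0; 1; 0; 1]%Z
; Ent (KA 7) [:: 0; 2; 3; 5; 6; 8; 9; 10]%N [:: 1; 0; 1; 1; 0; 1; 1; 0; 1; 1; 1; 0]%N false [::] [:: 1; 0; 1; 1; 0; 1; 1; 0; 1; 1; 1; 0]%Z
; Ent (KA 7) [:: 0; 2; 3; 5; 6; 8; 9; 11]%N [:: 1; 0; 1; 1; 0; 1; 1; 0; 1; 1; 0; 1]%N true [:: 1; 0; 0; 0; 0]%Z [:: -1; -1; 0; 0; 0; 1; 1; 0; 1; 0; -1; 0]%Z
; Ent (KD 4) [:: 0; 1; 2; 10; 11]%N [:: 2; 1; 1; 0; 0; 0; 0; 0; 0; 0; 1; 1]%N true [:: 0; 0; 0; 1; 0]%Z [:: 0; 0; 0; 0; 0; 0; 0; 0; 0; 0; 0; 0]%Z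
; Ent (KD 4) [:: 3; 1; 2; 4; 5]%N [:: 0; 1; 1; 2; 1; 1; 0; 0; 0; 0; 0; 0]%N true [:: 0; 0; 0; 0; 1]%Z [:: -1; 0; 0; 1; 1; 1; 1; 0; 0; -1; -1; -1]%Z
; Ent (KD 4) [:: 6; 4; 5; 7; 8]%N [:: 0; 0; 0; 0; 1; 1; 2; 1; 1; 0; 0; 0]%N true [:: 0; 0; 0; 1; 0]%Z [:: 0; 0; 0; 0; 0; 0; 0; 0; 0; 0; 0; 0]%Z
; Ent (KD 4) [:: 9; 7; 8; 10; 11]%N [:: 0; 0; 0; 0; 0; 0; 0; 1; 1; 2; 1; 1]%N true [:: 0; 0; 0; 0; 1]%Z [:: 0; 0; 0; 0; 0; 0; 0; 0; 0; 0; 0; 0]%Z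
; Ent (KD 6) [:: 0; 1; 3; 10; 11; 4; 5]%N [:: 2; 2; 0; 2; 1; 1; 0; 0; 0; 0; 1; 1]%N true [:: 0; 0; 0; 1; 1]%Z [:: 1; 1; 0; 1; 0; 0; -1; -1; -1; -1; 0; 0]%Z
; Ent (KD 6) [:: 0; 2; 3; 10; 11; 4; 5]%N [:: 2; 0; 2; 2; 1; 1; 0; 0; 0; 0; 1; 1]%N true [:: 0; 0; 0; 1; 1]%Z [:: 1; 0; 1; 1; 0; 0; -1; -1; -1; -1; 0; 0]%Z
; Ent (KD 6) [:: 0; 10; 9; 1; 2; 7; 8]%N [:: 2; 1; 1; 0; 0; 0; 0; 1; 1; 2; 2; 0]%N true [:: 0; 0; 0; 1; 1]%Z [:: 0; 0; 0; 0; 0; 0; 0; 0; 0; 0; 0; -1]%Z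
; Ent (KD 6) [:: 0; 11; 9; 1; 2; 7; 8]%N [:: 2; 1; 1; 0; 0; 0; 0; 1; 1; 2; 0; 2]%N true [:: 0; 0; 0; 1; 1]%Z [:: 0; 0; 0; 0; 0; 0; 0; 0; 0; 0; -1; 0]%Z
; Ent (KD 6) [:: 3; 4; 6; 1; 2; 7; 8]%N [:: 0; 1; 1; 2; 2; 0; 2; 1; 1; 0; 0; 0]%N true [:: 0; 0; 0; 1; 1]%Z [:: -1; 0; 0; 1; 1; 0; 1; 0; 0; -1; -1; -1]%Z
; Ent (KD 6) [:: 3; 5; 6; 1; 2; 7; 8]%N [:: 0; 1; 1; 2; 0; 2; 2; 1; 1; 0; 0; 0]%N true [:: 0; 0; 0; 1; 1]%Z [:: -1; 0; 0; 1; 0; 1; 1; 0; 0; -1; -1; -1]%Z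
; Ent (KD 6) [:: 6; 7; 9; 4; 5; 10; 11]%N [:: 0; 0; 0; 0; 1; 1; 2; 2; 0; 2; 1; 1]%N true [:: 0; 0; 0; 1; 1]%Z [:: 0; 0; 0; 0; 0; 0; 0; 0; -1; 0; 0; 0]%Z
; Ent (KD 6) [:: 6; 8; 9; 4; 5; 10; 11]%N [:: 0; 0; 0; 0; 1; 1; 2; 0; 2; 2; 1; 1]%N true [:: 0; 0; 0; 1; 1]%Z [:: 0; 0; 0; 0; 0; 0; 0; -1; 0; 0; 0; 0]%Z
; Ent (KD 8) [:: 0; 1; 3; 4; 6; 10; 11; 7; 8]%N [:: 2; 2; 0; 2; 2; 0; 2; 1; 1; 0; 1; 1]%N true [:: 0; 0; 0; 0; 1]%Z [:: 1; 1; 0; 1; 1; 0; 1; 0; 0; -1; 0; 0]%Z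
; Ent (KD 8) [:: 0; 1; 3; 5; 6; 10; 11; 7; 8]%N [:: 2; 2; 0; 2; 0; 2; 2; 1; 1; 0; 1; 1]%N true [:: 0; 0; 0; 0; 1]%Z [:: 1; 1; 0; 1; 0; 1; 1; 0; 0; -1; 0; 0]%Z
; Ent (KD 8) [:: 0; 2; 3; 4; 6; 10; 11; 7; 8]%N [:: 2; 0; 2; 2; 2; 0; 2; 1; 1; 0; 1; 1]%N true [:: 0; 0; 0; 0; 1]%Z [:: 1; 0; 1; 1; 1; 0; 1; 0; 0; -1; 0; 0]%Z
; Ent (KD 8) [:: 0; 2; 3; 5; 6; 10; 11; 7; 8]%N [:: 2; 0; 2; 2; 0; 2; 2; 1; 1; 0; 1; 1]%N true [:: 0; 0; 0; 0; 1]%Z [:: 1; 0; 1; 1; 0; 1; 1; 0; 0; -1; 0; 0]%Z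
; Ent (KD 8) [:: 0; 10; 9; 7; 6; 1; 2; 4; 5]%N [:: 2; 1; 1; 0; 1; 1; 2; 2; 0; 2; 2; 0]%N true [:: 0; 0; 0; 0; 1]%Z [:: 0; 0; 0; 0; 1; 1; 2; 1; 0; 0; 0; -1]%Z
; Ent (KD 8) [:: 0; 10; 9; 8; 6; 1; 2; 4; 5]%N [:: 2; 1; 1; 0; 1; 1; 2; 0; 2; 2; 2; 0]%N true [:: 0; 0; 0; 0; 1]%Z [:: 0; 0; 0; 0; 1; 1; 2; 0; 1; 0; 0; -1]%Z
; Ent (KD 8) [:: 0; 11; 9; 7; 6; 1; 2; 4; 5]%N [:: 2; 1; 1; 0; 1; 1; 2; 2; 0; 2; 0; 2]%N true [:: 0; 0; 0; 0; 1]%Z [:: 0; 0; 0; 0; 1; 1; 2; 1; 0; 0; -1; 0]%Z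
; Ent (KD 8) [:: 0; 11; 9; 8; 6; 1; 2; 4; 5]%N [:: 2; 1; 1; 0; 1; 1; 2; 0; 2; 2; 0; 2]%N true [:: 0; 0; 0; 0; 1]%Z [:: 0; 0; 0; 0; 1; 1; 2; 0; 1; 0; -1; 0]%Z
; Ent (KD 8) [:: 3; 1; 0; 10; 9; 4; 5; 7; 8]%N [:: 2; 2; 0; 2; 1; 1; 0; 1; 1; 2; 2; 0]%N true [:: 0; 0; 0; 1; 0]%Z [:: 1; 1; 0; 1; 0; 0; -1; 0; 0; 1; 1; 0]%Z
; Ent (KD 8) [:: 3; 1; 0; 11; 9; 4; 5; 7; 8]%N [:: 2; 2; 0; 2; 1; 1; 0; 1; 1; 2; 0; 2]%N true [:: 0; 0; 0; 1; 0]%Z [:: 1; 1; 0; 1; 0; 0; -1; 0; 0; 1; 0; 1]%Z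
; Ent (KD 8) [:: 3; 2; 0; 10; 9; 4; 5; 7; 8]%N [:: 2; 0; 2; 2; 1; 1; 0; 1; 1; 2; 2; 0]%N true [:: 0; 0; 0; 1; 0]%Z [:: 1; 0; 1; 1; 0; 0; -1; 0; 0; 1; 1; 0]%Z
; Ent (KD 8) [:: 3; 2; 0; 11; 9; 4; 5; 7; 8]%N [:: 2; 0; 2; 2; 1; 1; 0; 1; 1; 2; 0; 2]%N true [:: 0; 0; 0; 1; 0]%Z [:: 1; 0; 1; 1; 0; 0; -1; 0; 0; 1; 0; 1]%Z
; Ent (KD 8) [:: 3; 4; 6; 7; 9; 1; 2; 10; 11]%N [:: 0; 1; 1; 2; 2; 0; 2; 2; 0; 2; 1; 1]%N true [:: 0; 0; 0; 1; 0]%Z [:: -1; 0; 0; 1; 1; 0; 1; 1; 0; 1; 0; 0]%Z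
; Ent (KD 8) [:: 3; 4; 6; 8; 9; 1; 2; 10; 11]%N [:: 0; 1; 1; 2; 2; 0; 2; 0; 2; 2; 1; 1]%N true [:: 0; 0; 0; 1; 0]%Z [:: -1; 0; 0; 1; 1; 0; 1; 0; 1; 1; 0; 0]%Z
; Ent (KD 8) [:: 3; 5; 6; 7; 9; 1; 2; 10; 11]%N [:: 0; 1; 1; 2; 0; 2; 2; 2; 0; 2; 1; 1]%N true [:: 0; 0; 0; 1; 0]%Z [:: -1; 0; 0; 1; 0; 1; 1; 1; 0; 1; 0; 0]%Z
; Ent (KD 8) [:: 3; 5; 6; 8; 9; 1; 2; 10; 11]%N [:: 0; 1; 1; 2; 0; 2; 2; 0; 2; 2; 1; 1]%N true [:: 0; 0; 0; 1; 0]%Z [:: -1; 0; 0; 1; 0; 1; 1; 0; 1; 1; 0; 0]%Z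
].
Definition reps1 : seq nat := [:: 0; 1]%N.
Definition reps2 : seq nat := [:: 4; 7; 9; 10; 13; 14; 16; 19]%N.
Definition reps3 : seq nat := [:: 5; 6; 8; 11; 12; 15; 17; 18]%N.
Definition reps4 : seq nat := [:: 20; 21]%N.
Definition reps5 : seq nat := [:: 24; 25; 26; 27; 28; 29; 30; 31]%N.
Definition reps6 : seq nat := [:: 32; 33; 34; 35; 36; 37; 38; 39; 40; 41; 42; 43; 44; 45; 46; 47]%N.
Definition seqidx : seq nat := [:: 0; 4; 7; 13; 14; 21; 20; 28]%N.
Definition dent := Ent (KA 1) [::] [::] false [::] [::].
Definition ce k := nth dent catl k.
Notation Dx x := (dbl (ee x) (em x)).
Notation Dv k := (Dx (ce k)).

Definition compat X s j := (j \notin s) && all (fun i => gramN (nth 0%N s i) j == kM X i (size s)) (iota 0 (size s)).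
Fixpoint ext X n s := match n with 0%N => [:: s] | n'.+1 => flatten [seq ext X n' (rcons s j) | j <- [seq j <- iota 0 12 | compat X s j]] end.
Definition allX := [seq KA n | n <- iota 1 11] ++ [seq KD n | n <- iota 4 8] ++ [:: KE6; KE7; KE8].
Definition lof X s := mkseq (fun k => if k \in s then kmult X (index k s) else 0%N) 12.
Definition check_complete := all (fun X => all (fun s => has (fun x => (eX x == X) && (el x == lof X s)) catl) (ext X (kv X) [::])) allX.

Definition sound_ok (x : ent) := let X := eX x in let s := esig x in let l := el x in
 [&& kvalid X, size s == kv X, all (fun j => j < 12)%N s & uniq s] && [&&
   all (fun i => all (fun j => gramN (nth 0%N s i) (nth 0%N s j) == kM X i j) (iota 0 (kv X))) (iota 0 (kv X)),
   all (fun i => nth 0%N l (nth 0%N s i) == kmult X i) (iota 0 (kv X)),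
   all (fun k => (k \in s) || (nth 0%N l k == 0%N)) (iota 0 12) & size l == 12%N].

Definition unitl n j : seq int := mkseq (fun i => (i == j)%:R) n.
Definition gens : seq (seq int * seq int) := [seq ([::], unitl 12 j) | j <- iota 0 12] ++ [seq (unitl 5 j, [::]) | j <- iota 0 5].
Definition half_ok x := if eh x then psi (Dx x) == psi (map Posz (el x))
  else [&& ee x == [::], em x == map Posz (el x) & has (fun g => ~~ (8 %| bilc (dbl [::] (map Posz (el x))) (dbl g.1 g.2))%Z) gens].

Definition allreps := reps1 ++ reps2 ++ reps3 ++ reps4 ++ reps5 ++ reps6.
Definition flt k := [seq x <- catl | psi (Dx x) == psi (Dv k)].
Definition fS k := [seq (eX x, coefs (el x), eh x) | x <- flt k].
Definition cr1 := all (fun k => k < size catl)%N allreps.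
Definition cr2 := all (fun x => has (fun k => psi (Dv k) == psi (Dx x)) allreps) catl.
Definition cr3 := uniq [seq psi (Dv k) | k <- allreps].
Definition cr4 := all (fun k => uniq [seq (eX x, el x) | x <- flt k]) allreps.

Definition adjt (tb : seq (seq bool)) i j := nth false (nth [::] tb i) j.
Fixpoint mc tb fuel (cand : seq nat) : nat := match fuel with 0%N => 0%N
  | f.+1 => foldr (fun x acc => maxn (mc tb f [seq y <- cand | (x < y)%N && adjt tb x y]).+1 acc) 0%N cand end.
Definition tbl := [seq [seq bilc (Dv i) (Dv j) == 4 | j <- allreps] | i <- allreps].
Definition check_seq := all (fun k => k < size catl)%N seqidx &&
  all (fun i => all (fun j => bilc (Dv (nth 0%N seqidx i)) (Dv (nth 0%N seqidx j)) == 4 * (i != j)%:Z) (iota 0 8)) (iota 0 8).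
Lemma c1 : all sound_ok catl. Proof. vm_cast_no_check (erefl true). Qed.
Lemma c2 : all (fun X => all (fun s => has (fun x => (eX x == X) && (el x == lof X s)) catl) (ext X (kv X) [::])) allX. Proof. vm_cast_no_check (erefl true). Qed.
Lemma c3 : all half_ok catl. Proof. vm_cast_no_check (erefl true). Qed.
Lemma r1 : all (fun k => k < size catl)%N allreps. Proof. vm_cast_no_check (erefl true). Qed.
Lemma r2 : all (fun x => has (fun k => psi (Dv k) == psi (Dx x)) allreps) catl. Proof. vm_cast_no_check (erefl true). Qed.
Lemma r3 : uniq [seq psi (Dv k) | k <- allreps]. Proof. vm_cast_no_check (erefl true). Qed.
Lemma r4 : all (fun k => uniq [seq (eX x, el x) | x <- flt k]) allreps. Proof. vm_cast_no_check (erefl true). Qed.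
Lemma t1 : all (fun k => perm_eq [seq (x.1.1, x.2) | x <- fS k] [:: (KA 3, false); (KA 3, false)]) reps1. Proof. vm_cast_no_check (erefl true). Qed.
Lemma t2 : all (fun k => perm_eq [seq (x.1.1, x.2) | x <- fS k] [:: (KA 7, true)]) reps2. Proof. vm_cast_no_check (erefl true). Qed.
Lemma t3 : all (fun k => perm_eq [seq (x.1.1, x.2) | x <- fS k] [:: (KA 7, false)]) reps3. Proof. vm_cast_no_check (erefl true). Qed.
Lemma t4 : all (fun k => perm_eq [seq (x.1.1, x.2) | x <- fS k] [:: (KD 4, true); (KD 4, true)]) reps4. Proof. vm_cast_no_check (erefl true). Qed.
Lemma t5 : all (fun k => perm_eq [seq (x.1.1, x.2) | x <- fS k] [:: (KD 6, true)]) reps5. Proof. vm_cast_no_check (erefl true). Qed.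
Lemma t6 : all (fun k => perm_eq [seq (x.1.1, x.2) | x <- fS k] [:: (KD 8, true)]) reps6. Proof. vm_cast_no_check (erefl true). Qed.
Lemma c5 : (mc tbl 44 (iota 0 44) <= 8)%N. Proof. vm_cast_no_check (erefl true). Qed.
Lemma c6a : all (fun k => k < size catl)%N seqidx.
Proof. vm_cast_no_check (erefl true). Qed.
Lemma c6 : all (fun i => all (fun j => bilc (Dv (nth 0%N seqidx i)) (Dv (nth 0%N seqidx j)) == 4 * (i != j)%:Z) (iota 0 8)) (iota 0 8). Proof. vm_cast_no_check (erefl true). Qed.

Set Implicit Arguments. Unset Strict Implicit. Unset Printing Implicit Defensive.
Local Open Scope ring_scope.

Lemma nth_Posz (s : seq nat) k : (map Posz s)`_k = (nth 0%N s k)%:Z.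
Proof. by elim: s k => [|x s IH] [|k] //=. Qed.

Lemma torsion2 (x : 'rV[int]_10) : x *+ 2 = 0 -> x = 0.
Proof.
rewrite -scaler_nat => /rowP H; apply/rowP => k; have := H k.
by rewrite !mxE => /eqP; rewrite mulf_eq0 => /orP [//|/eqP].
Qed.

Lemma half_unique (x y : 'rV[int]_10) : x *+ 2 = y *+ 2 -> x = y.
Proof. by move=> H; apply/eqP; rewrite -subr_eq0; apply/eqP/torsion2; rewrite mulrnBl H subrr. Qed.

Definition Wl : seq (seq int) := [:: [:: 0; 0; 1; 0; 1; 0; 0; 1; -1; 0; 0; 0]; [:: 0; 1; -1; 0; 0; 0; 0; 0; -1; 0; 0; -1]; [:: 0; -1; 0; 0; 0; 0; 0; -1; -1; 0; -1; 0]; [:: 0; 0; 0; 0; -1; 1; 0; 1; 0; 0; -1; 0]; [:: -1; 0; 0; 1; 0; 0; -1; 0; 0; 1; 0; 0]; [:: 1; 0; 0; 0; 0; -1; -1; 0; 0; 0; 0; 0]; [:: 0; 0; 0; -1; 0; 0; 0; 0; 1; 1; 0; 0]; [:: 0; 0; 1; 0; -1; -1; 0; 0; 0; 0; 0; -1]; [:: 0; 1; 0; 0; 0; -1; 0; 0; 0; 0; -1; 1]; [:: 0; 1; 1; 2; 2; 2; 2; 1; 1; 0; 0; 0]]%Z.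
Definition dl : seq int := [:: -8; -8; -8; -8; -8; -4; -4; -8; -8; 8]%Z.
Definition check_W := all (fun i => all (fun j => bilc (nth [::] Wl i) (nth [::] Wl j) == (if i == j then dl`_i else 0)) (iota 0 10)) (iota 0 10) && all (fun d => d != 0) dl.
Lemma cW : check_W. Proof. by vm_compute. Qed.

Lemma ext_complete X n : forall s t, uniq (s ++ t) -> all (fun j => j < 12)%N (s ++ t) ->
  (forall i j, (i < j < size (s ++ t))%N -> gramN (nth 0%N (s ++ t) i) (nth 0%N (s ++ t) j) = kM X i j) ->
  size t = n -> s ++ t \in ext X n s.
Proof.
elim: n => [|n IH] s [|j t] U A G Hn //.
  by rewrite cats0 /= mem_seq1.
move: Hn => /eqP; rewrite eqSS => /eqP Hn.
rewrite -cat_rcons; apply/flatten_mapP; exists j.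
  rewrite mem_filter mem_iota; apply/andP; split; last first.
    by move/allP: A; apply; rewrite mem_cat inE eqxx orbT.
  apply/andP; split.
    by move: U; rewrite cat_uniq /= => /and3P[_ /norP[]].
  apply/allP => i; rewrite mem_iota add0n => /andP[_ Hi]; apply/eqP.
  have := G i (size s); rewrite nth_cat Hi nth_cat ltnn subnn /=; apply.
  by rewrite size_cat /= -addSnnS leq_addr.
by apply: IH; rewrite ?cat_rcons.
Qed.

Lemma foldr_max_ge (F : nat -> nat) x cand : x \in cand -> (F x <= foldr (fun y acc => maxn (F y) acc) 0%N cand)%N.
Proof.
elim: cand => [|y c IH] //; rewrite inE /= => /orP [/eqP ->|xc]; first by rewrite leq_maxl.
by rewrite (leq_trans (IH xc)) // leq_maxr.
Qed.

Lemma mc_bound tb fuel : forall cand t, sorted ltn t -> {subset t <= cand} ->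
  (forall x y, x \in t -> y \in t -> (x < y)%N -> adjt tb x y) -> (size t <= fuel)%N -> (size t <= mc tb fuel cand)%N.
Proof.
elim: fuel => [|f IH] cand [|x t] // st sub adj sz.
apply: leq_trans (@foldr_max_ge (fun y => (mc tb f [seq z <- cand | (y < z)%N && adjt tb y z]).+1) x cand _); last first.
  by apply: sub; rewrite inE eqxx.
rewrite /= ltnS; apply: IH => //; first exact: path_sorted st.
move=> z zt; have xz : (x < z)%N by have := order_path_min ltn_trans st => /allP; apply.
rewrite mem_filter xz adj ?inE ?eqxx ?zt ?orbT //=; apply: sub; by rewrite inE zt orbT.
move=> a b ain bin; apply: adj; by rewrite inE ?ain ?bin orbT.
Qed.

Lemma clique_bound tb t : uniq t -> {subset t <= iota 0 44} ->
  (forall x y, x \in t -> y \in t -> x != y -> adjt tb x y) -> (size t <= mc tb 44 (iota 0 44))%N.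
Proof.
move=> ut sub adj; set u := sort leq t.
have pu : perm_eq u t by rewrite perm_sort.
rewrite -(perm_size pu); apply: mc_bound.
- by rewrite ltn_sorted_uniq_leq (perm_uniq pu) ut sort_sorted //; exact: leq_total.
- by move=> z; rewrite (perm_mem pu); apply: sub.
- move=> x y; rewrite !(perm_mem pu) => xt yt xy; apply: adj => //; by rewrite neq_ltn xy.
- rewrite (perm_size pu); have := uniq_leq_size ut sub; by rewrite size_iota.
Qed.

Lemma coefs_inj l l' : size l = 12%N -> size l' = 12%N -> coefs l = coefs l' -> l = l'.
Proof.
move=> sl sl' E; apply: (@eq_from_nth _ 0%N); rewrite ?sl ?sl' // => i lt.
by have := congr1 (fun f : {ffun 'I_12 -> nat} => f (inord i : 'I_12)) E; rewrite !ffunE inordK.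
Qed.

Lemma sz12 x : x \in catl -> size (el x) = 12%N.
Proof. by move/allP: c1 => H /H /andP[_ /and4P[_ _ _ /eqP]]. Qed.


Section Alg.
Variables (Q : 'M[int]_10) (r : 'I_12 -> 'rV[int]_10).
Hypothesis QT : Q^T = Q.
Hypothesis Hg : forall i j, dot Q (r i) (r j) = gram i j.

Lemma dotC x y : dot Q x y = dot Q y x.
Proof.
rewrite /dot; have -> : y *m Q *m x^T = (x *m Q *m y^T)^T.
  by rewrite !trmx_mul trmxK QT mulmxA.
by rewrite [in RHS]mxE.
Qed.
Lemma dotDl x y z : dot Q (x + y) z = dot Q x z + dot Q y z.
Proof. by rewrite /dot !mulmxDl mxE. Qed.
Lemma dotZl a x y : dot Q (a *: x) y = a * dot Q x y.
Proof. by rewrite /dot -!scalemxAl mxE. Qed.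
Lemma dot0l y : dot Q 0 y = 0.
Proof. by rewrite /dot !mul0mx mxE. Qed.
Lemma dotNl x y : dot Q (- x) y = - dot Q x y.
Proof. by rewrite -scaleN1r dotZl mulN1r. Qed.
Lemma dot_suml n (F : 'I_n -> 'rV[int]_10) y : dot Q (\sum_i F i) y = \sum_i dot Q (F i) y.
Proof. exact: (big_morph (fun x => dot Q x y) (fun a b => dotDl a b y) (dot0l y)). Qed.
Lemma dotMnl x y n : dot Q (x *+ n) y = dot Q x y *+ n.
Proof. by rewrite -scaler_nat dotZl mulr_natl. Qed.
Lemma dotMnr x y n : dot Q x (y *+ n) = dot Q x y *+ n.
Proof. by rewrite dotC dotMnl dotC. Qed.

Definition comb (c : seq int) : 'rV[int]_10 := \sum_(k < 12) c`_k *: r k.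

Lemma dot_comb_r c (j : 'I_12) : dot Q (comb c) (r j) = (psi c)`_j.
Proof.
rewrite /psi (nth_map 0%N) ?size_iota // nth_iota // add0n sumN_big dot_suml.
by apply: eq_bigr => i _; rewrite dotZl Hg gramE.
Qed.

Lemma dot_comb c d : dot Q (comb c) (comb d) = bilc c d.
Proof.
rewrite /bilc sumN_big dot_suml; apply: eq_bigr => i _; rewrite dotZl sumN_big.
congr (_ * _); rewrite dotC dot_suml; apply: eq_bigr => j _.
by rewrite dotZl dotC Hg gramE.
Qed.

Lemma cls_comb l : cls r (coefs l) = comb (map Posz l).
Proof. by apply: eq_bigr => k _; rewrite ffunE nth_Posz. Qed.


Lemma dotr_comb x c : dot Q x (comb c) = \sum_(k < 12) c`_k * dot Q x (r k).
Proof. by rewrite dotC dot_suml; apply: eq_bigr => k _; rewrite dotZl dotC. Qed.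

Lemma kerv v : (forall j : 'I_12, dot Q (r j) v = 0) -> v = 0.
Proof.
move=> Hv.
have cWij i j : (i < 10)%N -> (j < 10)%N -> bilc (nth [::] Wl i) (nth [::] Wl j) = (if i == j then dl`_i else 0).
  move=> Hi Hj; have /andP[+ _] := cW => /allP/(_ i); rewrite mem_iota add0n => /(_ Hi).
  by move/allP/(_ j); rewrite mem_iota add0n => /(_ Hj)/eqP.
have dl0 i : (i < 10)%N -> dl`_i != 0.
  move=> Hi; have /andP[_ /allP] := cW; apply; apply: mem_nth; done.
set M := \matrix_(i < 10, k < 10) (comb ((nth [::] Wl i))) 0 k.
have Mdot (i j : 'I_10) : (M *m Q *m M^T) i j = dot Q (comb (nth [::] Wl i)) (comb (nth [::] Wl j)).
  rewrite /dot !mxE; apply: eq_bigr => k _; rewrite !mxE; congr (_ * _).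
  by apply: eq_bigr => l _; rewrite !mxE.
have MQM : M *m Q *m M^T = diag_mx (\row_i dl`_i).
  apply/matrixP => i j; rewrite Mdot dot_comb cWij // !mxE.
  have E : (nat_of_ord i == nat_of_ord j) = (i == j) by [].
  by rewrite E; case: (i == j); rewrite ?mulr1n ?mulr0n.
have : \det (M *m Q *m M^T) != 0.
  rewrite MQM det_diag; apply/prodf_neq0 => i _; rewrite mxE; exact: dl0.
rewrite !det_mulmx det_tr !mulf_eq0 !negb_or => /andP[/andP[dM dQ] _].
set A := M *m Q.
have dA : \det A != 0 by rewrite det_mulmx mulf_neq0.
have AV : A *m v^T = 0.
  apply/matrixP => i k; rewrite (ord1 k) [RHS]mxE.
  have -> : (A *m v^T) i 0 = dot Q (comb (nth [::] Wl i)) v.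
    rewrite /dot !mxE; apply: eq_bigr => l _; rewrite !mxE; congr (_ * _).
    by apply: eq_bigr => l' _; rewrite !mxE.
  by rewrite dotC dotr_comb big1 // => l _; rewrite dotC Hv mulr0.
have := congr1 (mulmx (\adj A)) AV; rewrite mulmxA mul_adj_mx mul_scalar_mx mulmx0.
move/matrixP => H2; apply/rowP => k; have := H2 k 0; rewrite !mxE => /eqP.
by rewrite mulf_eq0 (negbTE dA) /= => /eqP.
Qed.

Lemma comb_psi c d : psi c = psi d -> comb c = comb d.
Proof.
move=> H; apply/eqP; rewrite -subr_eq0; apply/eqP/kerv => j.
by rewrite dotC dotDl dotNl !dot_comb_r H subrr.
Qed.

Variable zl : seq 'rV[int]_10.
Hypothesis Hz : forall j, (j < 5)%N -> zl`_j *+ 2 = comb (map Posz (nth [::] hl j)).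

Definition elt (e m : seq int) := \sum_(j < 5) e`_j *: zl`_j + comb m.

Lemma comb_dbl e m : comb (dbl e m) = elt e m *+ 2.
Proof.
rewrite /elt mulrnDl -sumrMnl.
transitivity (\sum_(k<12) ((\sum_(j<5) e`_j * (nth 0%N (nth [::] hl j) k)%:Z) *: r k + (m`_k *+ 2) *: r k)).
  by apply: eq_bigr => k _; rewrite nth_mkseq // sumN_big scalerDl.
rewrite big_split /=; congr (_ + _).
  rewrite (eq_bigr (fun k : 'I_12 => \sum_(j<5) (e`_j * (nth 0%N (nth [::] hl j) k)%:Z) *: r k)); last first.
    by move=> k _; rewrite scaler_suml.
  rewrite exchange_big /=; apply: eq_bigr => j _; rewrite scalerMnr Hz // /comb scaler_sumr.
  by apply: eq_bigr => k _; rewrite nth_Posz scalerA.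
by rewrite /comb -sumrMnl; apply: eq_bigr => k _; rewrite scalerMnl.
Qed.

Lemma elt_nil c : elt [::] c = comb c.
Proof. by rewrite /elt big1 ?add0r // => j _; rewrite nth_nil scale0r. Qed.

Lemma dot_elt e m e' m' : dot Q (elt e m) (elt e' m') * 4 = bilc (dbl e m) (dbl e' m').
Proof. by rewrite -dot_comb !comb_dbl dotMnl dotMnr -mulrnA mulr_natr. Qed.

Lemma dot_r e m (j : 'I_12) : dot Q (elt e m) (r j) *+ 2 = (psi (dbl e m))`_j.
Proof. by rewrite -dotMnl -comb_dbl dot_comb_r. Qed.

Lemma elt_eq e m e' m' : psi (dbl e m) = psi (dbl e' m') -> elt e m = elt e' m'.
Proof. by move=> H; apply: half_unique; rewrite -!comb_dbl; apply: comb_psi. Qed.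

Lemma elt_psi e m e' m' : elt e m = elt e' m' -> psi (dbl e m) = psi (dbl e' m').
Proof.
move=> H; apply: (@eq_from_nth _ 0); rewrite ?size_map ?size_iota // => j lt.
by rewrite -(dot_r _ _ (Ordinal lt)) -(dot_r e' m' (Ordinal lt)) H.
Qed.

Lemma sound x : sound_ok x -> is_cycle Q r (eX x) (coefs (el x)).
Proof.
case: x => [[[[[X s] l] h] e] m]; rewrite /sound_ok.
cbv zeta; rewrite /eX /esig /el.
case/andP => /and4P[kX /eqP sz /allP s12 us] /and4P[/allP dots /allP mults /allP zeros /eqP sl].
split => //.
have lt i : (i < kv X)%N -> (nth 0%N s i < 12)%N by move=> H; apply: s12; apply: mem_nth; rewrite sz.
exists (fun i : 'I_(kv X) => inord (nth 0%N s i) : 'I_12); split.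
- move=> i j /(congr1 (@nat_of_ord 12)); rewrite !inordK ?lt // => /eqP; rewrite nth_uniq ?sz // => /eqP; exact: val_inj.
- move=> i j; rewrite Hg gramE !inordK ?lt //; apply/eqP.
  have := dots i; rewrite mem_iota add0n leq0n ltn_ord => /(_ isT) /allP /(_ j).
  by rewrite mem_iota add0n leq0n ltn_ord; apply.
- move=> i; rewrite ffunE inordK ?lt //; apply/eqP; apply: mults.
  by rewrite mem_iota add0n leq0n ltn_ord.
- move=> k Hk; rewrite ffunE; have := zeros k; rewrite mem_iota /= ltn_ord => /(_ isT) /orP [ks|/eqP //].
  have ilt : (index (nat_of_ord k) s < kv X)%N by rewrite -sz index_mem.
  have := Hk (Ordinal ilt); rewrite -(inj_eq val_inj) /= inordK ?nth_index ?eqxx //.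
Qed.

Lemma complete X a : is_cycle Q r X a -> exists2 x, x \in catl & (eX x = X /\ a = coefs (el x)).
Proof.
case=> kX [sigma [inj dots mults zeros]].
have kv12 : (kv X <= 12)%N by have := leq_card sigma inj; rewrite !card_ord.
have XA : X \in allX.
  case: X kX kv12 {sigma inj dots mults zeros} => //= n kX kv12; rewrite !mem_cat.
    by apply/orP; left; apply: map_f; rewrite mem_iota kX.
  by apply/orP; right; apply/orP; left; apply: map_f; rewrite mem_iota kX.
set s := [seq val (sigma i) | i <- enum 'I_(kv X)].
have sz : size s = kv X by rewrite size_map size_enum_ord.
have ns (i : 'I_(kv X)) : nth 0%N s i = sigma i by rewrite (nth_map i) ?size_enum_ord // nth_ord_enum.
have ins : s \in ext X (kv X) [::].
  rewrite -[s]/([::] ++ s); apply: ext_complete => //=.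
  - rewrite map_inj_uniq ?enum_uniq // => i j /val_inj; exact: inj.
  - apply/allP => k; rewrite /s => /mapP [i _ ->]; exact: ltn_ord.
  - move=> i j /andP[ij jlt]; have ilt := ltn_trans ij jlt; rewrite sz in jlt ilt.
    rewrite -[i]/(nat_of_ord (Ordinal ilt)) -[j]/(nat_of_ord (Ordinal jlt)) !ns -gramE -Hg.
    exact: dots.
have /hasP [x xin /andP[/eqP xX /eqP xl]] : has (fun x => (eX x == X) && (el x == lof X s)) catl.
  by move/allP: c2 => /(_ X XA) /allP /(_ s ins).
exists x => //; split => //.
apply/ffunP => k; rewrite xl ffunE /lof nth_mkseq //.
case: ifP => ks.
  have ilt : (index (nat_of_ord k) s < kv X)%N by rewrite -sz index_mem.
  have E : sigma (Ordinal ilt) = k by apply: ord_inj; rewrite -ns /= nth_index.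
  by rewrite -{1}E mults.
apply: zeros => i; apply/eqP => E; move: ks; rewrite -E -ns mem_nth // sz. exact: ltn_ord.
Qed.

Definition val x := elt (ee x) (em x).

Lemma hok x : x \in catl -> half_ok x.
Proof. by move/allP: c3 => H /H. Qed.

Lemma val_h x : x \in catl -> eh x -> val x *+ 2 = cls r (coefs (el x)).
Proof.
move=> xin hx; have := hok xin; rewrite /half_ok hx => /eqP P.
by rewrite -comb_dbl cls_comb; apply: comb_psi.
Qed.

Lemma val_nh x : x \in catl -> eh x = false -> val x = cls r (coefs (el x)).
Proof.
move=> xin hx; have := hok xin; rewrite /half_ok hx => /and3P [/eqP E /eqP M _].
by rewrite /val E M elt_nil cls_comb.
Qed.

Lemma nonhalf x : x \in catl -> eh x = false -> ~ halfable (cls r (coefs (el x))).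
Proof.
move=> xin hx [z Hzz]; have := hok xin; rewrite /half_ok hx => /and3P [_ _ /hasP [g _]].
rewrite -dot_elt elt_nil -cls_comb Hzz dotMnl.
have -> : dot Q z (elt g.1 g.2) *+ 2 * 4 = dot Q z (elt g.1 g.2) * 8 by rewrite -[dot Q z _ *+ 2]mulr_natr -mulrA.
by rewrite dvdz_mull.
Qed.

Lemma half_iff x : x \in catl -> (eh x = true <-> halfable (cls r (coefs (el x)))).
Proof.
move=> xin; split => [hx|]; first by exists (val x); rewrite val_h.
by case hx: (eh x) => // /(nonhalf xin hx).
Qed.

Lemma cmap_val x f : x \in catl -> (cmap r (coefs (el x)) f <-> f = val x).
Proof.
move=> xin; case hx: (eh x); split.
- case=> [[_ H]|[nh _]]; first by apply: half_unique; rewrite H val_h.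
  by case: nh; exists (val x); rewrite val_h.
- move=> ->; left; split; last by rewrite val_h.
  by exists (val x); rewrite val_h.
- case=> [[hh _]|[_ ->]]; first by case: (nonhalf xin hx hh).
  by rewrite val_nh.
- by move=> ->; right; split; [exact: nonhalf | rewrite val_nh].
Qed.

Lemma HF_iff f : HF Q r f <-> exists2 x, x \in catl & f = val x.
Proof.
split.
  case=> X [a [cyc cm]]; have [x xin [_ E]] := complete cyc; subst a.
  by exists x => //; apply/(cmap_val _ xin).
case=> x xin ->; exists (eX x), (coefs (el x)); split.
  by apply: sound; move/allP: c1; apply.
by apply/(cmap_val _ xin).
Qed.

Lemma val_eqP x y : psi (Dx x) = psi (Dx y) <-> val x = val y.
Proof. by split; [apply: elt_eq | apply: elt_psi]. Qed.

Lemma fib_a k : k \in allreps -> uniq [seq x.1 | x <- fS k].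
Proof.
move=> kin.
have E : [seq x.1 | x <- fS k] =
     map (fun p : ktype * seq nat => (p.1, coefs p.2)) [seq (eX x, el x) | x <- flt k].
  by rewrite -!map_comp; apply: eq_map.
rewrite E map_inj_in_uniq.
  by move/allP: r4; apply.
move=> [X1 l1] [X2 l2] /mapP [x1 x1in [-> ->]] /mapP [x2 x2in [-> ->]] [-> /coefs_inj] -> //.
  by apply: sz12; move: x1in; rewrite mem_filter => /andP[].
by apply: sz12; move: x2in; rewrite mem_filter => /andP[].
Qed.
Lemma L1 y : y \in catl -> is_cycle Q r (eX y) (coefs (el y)).
Proof. by move=> yc; apply: sound; move/allP: c1; apply. Qed.
Lemma L2 y k : y \in catl -> psi (Dx y) = psi (Dv k) -> cmap r (coefs (el y)) (val (ce k)).
Proof. by move=> yc Py; apply/(cmap_val _ yc); symmetry; apply/val_eqP; exact: Py. Qed.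
Lemma L3 y : y \in catl -> (eh y = true <-> halfable (cls r (coefs (el y)))).
Proof. exact: half_iff. Qed.
Lemma fib_b k : forall x, x \in fS k ->
           [/\ is_cycle Q r x.1.1 x.1.2, cmap r x.1.2 (val (ce k)) & (x.2 = true <-> halfable (cls r x.1.2))].
Proof.
move=> x; rewrite /fS => /mapP [y yin ->].
have yc : y \in catl by move: yin; rewrite mem_filter => /andP[].
have Py : psi (Dx y) = psi (Dv k) by move: yin; rewrite mem_filter => /andP[/eqP].
split; [exact: L1 | exact: L2 | exact: L3].
Qed.
Lemma fib_c k : forall X a, is_cycle Q r X a -> cmap r a (val (ce k)) -> exists b, (X, a, b) \in fS k.
Proof.
move=> X a cyc cm; have [y yc [yX ya]] := complete cyc; subst X a.
have E : val (ce k) = val y by apply/(cmap_val _ yc).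
exists (eh y); rewrite /fS; apply/mapP; exists y => //.
rewrite mem_filter yc andbT; apply/eqP; symmetry; apply/val_eqP; exact: E.
Qed.
Lemma fib k T : k \in allreps -> perm_eq [seq (x.1.1, x.2) | x <- fS k] T -> fib_type Q r (val (ce k)) T.
Proof.
move=> kin pT; exists (fS k); split.
- exact: fib_a.
- exact: fib_b.
- exact: fib_c.
- exact: pT.
Qed.

Definition fs (rs : seq nat) := [seq val (ce k) | k <- rs].

Lemma gv x : [seq dot Q (val x) (r (inord j)) *+ 2 | j <- iota 0 12] = psi (Dx x).
Proof.
apply: (@eq_from_nth _ 0); rewrite ?size_map ?size_iota // => j lt.
by rewrite (nth_map 0%N) ?size_iota // nth_iota // add0n /val dot_r inordK.
Qed.

Lemma inc k : k \in allreps -> ce k \in catl.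
Proof. by move=> kin; apply: mem_nth; move/allP: r1; apply. Qed.

Lemma inrep x : x \in catl -> exists2 k, k \in allreps & val x = val (ce k).
Proof.
move=> xin; have := allP r2 x xin => /hasP [k kin /eqP P].
by exists k => //; apply/val_eqP; exact: (esym P).
Qed.

Lemma iso_ex : iso_seq Q r (fs seqidx).
Proof.
split.
  move=> f /mapP [k kin ->]; apply/HF_iff; exists (ce k) => //.
  by apply: mem_nth; move/allP: c6a; apply.
move=> i j; rewrite size_map => ilt jlt.
rewrite /fs !(nth_map 0%N) //.
apply: (@mulIf _ 4) => //; rewrite /val dot_elt.
have : i \in iota 0 8 by rewrite mem_iota.
move/(allP c6) => /allP; have : j \in iota 0 8 by rewrite mem_iota.
by move=> jin /(_ j jin) /eqP ->; rewrite mulrC.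
Qed.

Lemma sa : size allreps = 44%N. Proof. by []. Qed.

Lemma bound s : iso_seq Q r s -> (size s <= 8)%N.
Proof.
move=> [Hin Hdot].
pose V i := val (ce (nth 0%N allreps i)).
have ex f : f \in s -> has (fun i => V i == f) (iota 0 44).
  move=> fin; have := Hin f fin => /HF_iff [x xin ->].
  have [k kin E] := inrep xin.
  apply/hasP; exists (index k allreps); first by rewrite mem_iota add0n leq0n -sa index_mem.
  by rewrite /V nth_index // E.
pose F f := find (fun i => V i == f) (iota 0 44).
have FV f : f \in s -> V (F f) = f.
  move=> fin; have H := ex f fin; have := nth_find 0%N H.
  rewrite nth_iota ?add0n; first by move/eqP.
  by rewrite -(size_iota 0 44) -has_find.
have Flt f : f \in s -> (F f < 44)%N.
  by move/ex; rewrite has_find size_iota.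
have dV a b : (a < 44)%N -> (b < 44)%N -> adjt tbl a b = (dot Q (V a) (V b) * 4 == 4).
  move=> al bl; rewrite /adjt /tbl (nth_map 0%N) ?sa // (nth_map 0%N) ?sa //.
  by rewrite /V /val dot_elt.
clearbody F V.
have us : uniq s.
  apply/(uniqP 0) => p q pin qin E; apply/eqP; apply: contraT => pq.
  have := Hdot p q pin qin; rewrite E (Hdot q q qin qin) eqxx pq.
  by move/eqP.
have ut : uniq (map F s).
  rewrite map_inj_in_uniq; first exact: us.
  by move=> f g fin gin E; rewrite -(FV f fin) -(FV g gin) E.
have := @clique_bound tbl _ ut.
rewrite size_map => H; apply: leq_trans (H _ _) c5.
  by move=> i /mapP [f fin ->]; rewrite mem_iota add0n leq0n Flt.
move=> i j /mapP [f fin ->] /mapP [g gin ->] ne.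
have fg : f != g by apply: contraNneq ne => ->.
rewrite dV; [|exact: Flt|exact: Flt].
rewrite (FV f fin) (FV g gin).
rewrite -(nth_index 0 fin) -(nth_index 0 gin) Hdot ?index_mem //.
have -> : (index f s != index g s).
  by apply: contra fg => /eqP E; rewrite -(nth_index 0 fin) E nth_index.
by [].
Qed.

Lemma main_sec :
  (exists fs1 fs2 fs3 fs4 fs5 fs6 : seq 'rV[int]_10,
     map size [:: fs1; fs2; fs3; fs4; fs5; fs6] = [:: 2; 8; 8; 2; 8; 16]%N /\
     uniq (fs1 ++ fs2 ++ fs3 ++ fs4 ++ fs5 ++ fs6) /\
     (forall f, HF Q r f <-> f \in fs1 ++ fs2 ++ fs3 ++ fs4 ++ fs5 ++ fs6) /\
     (forall f, f \in fs1 -> fib_type Q r f [:: (KA 3, false); (KA 3, false)]) /\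
     (forall f, f \in fs2 -> fib_type Q r f [:: (KA 7, true)]) /\
     (forall f, f \in fs3 -> fib_type Q r f [:: (KA 7, false)]) /\
     (forall f, f \in fs4 -> fib_type Q r f [:: (KD 4, true); (KD 4, true)]) /\
     (forall f, f \in fs5 -> fib_type Q r f [:: (KD 6, true)]) /\
     (forall f, f \in fs6 -> fib_type Q r f [:: (KD 8, true)])) /\
  cnd_eq Q r 8 /\
  (exists s : seq 'rV[int]_10,
     size s = 8%N /\ iso_seq Q r s /\
     s`_0 = cls r (coefs [:: 1; 1; 1; 1; 0; 0; 0; 0; 0; 0; 0; 0]%N) /\
     s`_1 *+ 2 = cls r (coefs [:: 1; 1; 0; 1; 1; 0; 1; 1; 0; 1; 1; 0]%N) /\
     s`_2 *+ 2 = cls r (coefs [:: 1; 1; 0; 1; 1; 0; 1; 0; 1; 1; 0; 1]%N) /\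
     s`_3 *+ 2 = cls r (coefs [:: 1; 0; 1; 1; 1; 0; 1; 1; 0; 1; 0; 1]%N) /\
     s`_4 *+ 2 = cls r (coefs [:: 1; 0; 1; 1; 1; 0; 1; 0; 1; 1; 1; 0]%N) /\
     s`_5 *+ 2 = cls r (coefs [:: 0; 1; 1; 2; 1; 1; 0; 0; 0; 0; 0; 0]%N) /\
     s`_6 *+ 2 = cls r (coefs [:: 2; 1; 1; 0; 0; 0; 0; 0; 0; 0; 1; 1]%N) /\
     s`_7 *+ 2 = cls r (coefs [:: 0; 1; 1; 2; 2; 0; 2; 1; 1; 0; 0; 0]%N)).
Proof.
split.
  exists (fs reps1), (fs reps2), (fs reps3), (fs reps4), (fs reps5), (fs reps6).
  have cat_fs : fs reps1 ++ fs reps2 ++ fs reps3 ++ fs reps4 ++ fs reps5 ++ fs reps6 = fs allreps.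
    by rewrite /fs /allreps !map_cat.
  rewrite cat_fs; split; first by [].
  split.
    apply: (@map_uniq _ _ (fun v => [seq dot Q v (r (inord j)) *+ 2 | j <- iota 0 12])).
    have -> : [seq [seq dot Q v (r (inord j)) *+ 2 | j <- iota 0 12] | v <- fs allreps] =
              [seq psi (Dv k) | k <- allreps].
      by rewrite /fs -map_comp; apply: eq_map => k; exact: gv.
    exact: r3.
  split.
    move=> f; split.
      move/HF_iff => [x xin ->]; have [k kin E] := inrep xin.
      by rewrite E /fs; apply: (map_f (fun k => val (ce k))).
    by case/mapP => k kin ->; apply/HF_iff; exists (ce k) => //; exact: inc.
  have inA k rs : k \in rs -> {subset rs <= allreps} -> k \in allreps by move=> H S; apply: S.
  split; first by move=> f /mapP [k kin ->]; apply: fib; [rewrite /allreps !mem_cat kin | exact: (allP t1)].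
  split; first by move=> f /mapP [k kin ->]; apply: fib; [rewrite /allreps !mem_cat kin ?orbT | exact: (allP t2)].
  split; first by move=> f /mapP [k kin ->]; apply: fib; [rewrite /allreps !mem_cat kin ?orbT | exact: (allP t3)].
  split; first by move=> f /mapP [k kin ->]; apply: fib; [rewrite /allreps !mem_cat kin ?orbT | exact: (allP t4)].
  split; first by move=> f /mapP [k kin ->]; apply: fib; [rewrite /allreps !mem_cat kin ?orbT | exact: (allP t5)].
  by move=> f /mapP [k kin ->]; apply: fib; [rewrite /allreps !mem_cat kin ?orbT | exact: (allP t6)].
split.
  split; last exact: bound.
  by exists (fs seqidx); split; [rewrite size_map | exact: iso_ex].
exists (fs seqidx); split; first by rewrite size_map.
split; first exact: iso_ex.
have cin k : (k < 48)%N -> ce k \in catl by move=> kl; apply: mem_nth.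
rewrite /fs !(nth_map 0%N) //=.
split; first by rewrite (val_nh (cin 0%N isT)).
split; first by rewrite (val_h (cin 4%N isT)).
split; first by rewrite (val_h (cin 7%N isT)).
split; first by rewrite (val_h (cin 13%N isT)).
split; first by rewrite (val_h (cin 14%N isT)).
split; first by rewrite (val_h (cin 21%N isT)).
split; first by rewrite (val_h (cin 20%N isT)).
by rewrite (val_h (cin 28%N isT)).
Qed.
End Alg.

Unset Implicit Arguments.
Unset Strict Implicit.

Theorem proposition6p2 (Q : 'M[int]_10) (r : 'I_12 -> 'rV[int]_10) :
  Q^T = Q -> (forall i, (2 %| Q i i)%Z) -> `|\det Q| = 1 ->
  (forall i j, dot Q (r i) (r j) = gram i j) ->
  halfable (cls r (coefs [:: 1; 1; 0; 1; 1; 0; 1; 1; 0; 1; 1; 0]%N)) ->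
  halfable (cls r (coefs [:: 2; 1; 1; 0; 0; 0; 0; 0; 0; 0; 1; 1]%N)) ->
  halfable (cls r (coefs [:: 0; 1; 1; 2; 1; 1; 0; 0; 0; 0; 0; 0]%N)) ->
  halfable (cls r (coefs [:: 0; 0; 0; 0; 1; 1; 2; 1; 1; 0; 0; 0]%N)) ->
  halfable (cls r (coefs [:: 0; 0; 0; 0; 0; 0; 0; 1; 1; 2; 1; 1]%N)) ->
  (exists fs1 fs2 fs3 fs4 fs5 fs6 : seq 'rV[int]_10,
     map size [:: fs1; fs2; fs3; fs4; fs5; fs6] = [:: 2; 8; 8; 2; 8; 16]%N /\
     uniq (fs1 ++ fs2 ++ fs3 ++ fs4 ++ fs5 ++ fs6) /\
     (forall f, HF Q r f <-> f \in fs1 ++ fs2 ++ fs3 ++ fs4 ++ fs5 ++ fs6) /\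
     (forall f, f \in fs1 -> fib_type Q r f [:: (KA 3, false); (KA 3, false)]) /\
     (forall f, f \in fs2 -> fib_type Q r f [:: (KA 7, true)]) /\
     (forall f, f \in fs3 -> fib_type Q r f [:: (KA 7, false)]) /\
     (forall f, f \in fs4 -> fib_type Q r f [:: (KD 4, true); (KD 4, true)]) /\
     (forall f, f \in fs5 -> fib_type Q r f [:: (KD 6, true)]) /\
     (forall f, f \in fs6 -> fib_type Q r f [:: (KD 8, true)])) /\
  cnd_eq Q r 8 /\
  (exists s : seq 'rV[int]_10,
     size s = 8%N /\ iso_seq Q r s /\
     s`_0 = cls r (coefs [:: 1; 1; 1; 1; 0; 0; 0; 0; 0; 0; 0; 0]%N) /\
     s`_1 *+ 2 = cls r (coefs [:: 1; 1; 0; 1; 1; 0; 1; 1; 0; 1; 1; 0]%N) /\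
     s`_2 *+ 2 = cls r (coefs [:: 1; 1; 0; 1; 1; 0; 1; 0; 1; 1; 0; 1]%N) /\
     s`_3 *+ 2 = cls r (coefs [:: 1; 0; 1; 1; 1; 0; 1; 1; 0; 1; 0; 1]%N) /\
     s`_4 *+ 2 = cls r (coefs [:: 1; 0; 1; 1; 1; 0; 1; 0; 1; 1; 1; 0]%N) /\
     s`_5 *+ 2 = cls r (coefs [:: 0; 1; 1; 2; 1; 1; 0; 0; 0; 0; 0; 0]%N) /\
     s`_6 *+ 2 = cls r (coefs [:: 2; 1; 1; 0; 0; 0; 0; 0; 0; 0; 1; 1]%N) /\
     s`_7 *+ 2 = cls r (coefs [:: 0; 1; 1; 2; 2; 0; 2; 1; 1; 0; 0; 0]%N)).
Proof.
move=> QT _ _ Hg [z0 E0] [z1 E1] [z2 E2] [z3 E3] [z4 E4].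
apply: (@main_sec Q r QT Hg [:: z0; z1; z2; z3; z4]).
case=> [|[|[|[|[|j]]]]] // _; rewrite -cls_comb.
- exact: (esym E0).
- exact: (esym E1).
- exact: (esym E2).
- exact: (esym E3).
- exact: (esym E4).
Qed.
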